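(* Let $G$ be a nice graph, $V_4$ the set of vertices of degree at least four in $G$, $\mathcal{P}$ a path partition of $G$ of minimum size, and $\mathcal{P}_4\subseteq\mathcal{P}$ the subfamily of paths that visit at least one vertex of $V_4$. Then $\mathcal{P}_4$ is bull-free.
   Context: All graphs are finite, simple and undirected; subcubic means maximum degree at most $3$. A path partition of $G$ is a collection of pairwise edge-disjoint paths whose edge sets together cover $E(G)$. A pan cycle of $G$ is a cycle containing a unique vertex of degree $3$ in $G$, all its other vertices having degree $2$ in $G$. A bull cycle of $G$ is a cycle containing exactly two vertices of degree $3$ in $G$, all its other vertices having degree $2$ in $G$. A graph is nice if it is connected, not subcubic, has no pan cycles, and all its bull cycles are triangles. A bull triangle is a bull cycle of length three; its two degree-$3$ vertices form a bull-pair. A path is bull-free if its two endpoints do not form a bull-pair; a family of paths is bull-free if each of its paths is. *)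

(* Defs.v *)
(* Simple graphs: symmetric irreflexive relation g on a finType T. *)
From mathcomp Require Import all_boot.
Set Implicit Arguments. Unset Strict Implicit. Unset Printing Implicit Defensive.

Section Graphs.
Variables (T : finType) (g : rel T).

Definition deg (x : T) : nat := #|[set y | g x y]|.

Definition is_gpath (p : seq T) : bool :=
  [&& uniq p, 1 < size p & (if p is x :: q then path g x q else false)].

Definition pedges (p : seq T) : seq {set T} :=
  [seq [set xy.1; xy.2] | xy <- zip p (behead p)].

Definition is_path_partition (P : seq (seq T)) : Prop :=
  [/\ (forall p, p \in P -> is_gpath p),
      (forall i j, i < size P -> j < size P -> i != j ->
         forall ed, ed \in pedges (nth [::] P i) -> ed \notin pedges (nth [::] P j))
    & (forall x y, g x y -> exists2 p, p \in P & [set x; y] \in pedges p)].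

Definition min_path_partition (P : seq (seq T)) : Prop :=
  is_path_partition P /\ forall Q, is_path_partition Q -> size P <= size Q.

Definition is_gcycle (c : seq T) : bool :=
  [&& uniq c, 2 < size c & cycle g c].

Definition pan_cycle (c : seq T) : Prop :=
  [/\ is_gcycle c, #|[set x | (x \in c) && (deg x == 3)]| = 1
    & forall x, x \in c -> (deg x == 2) || (deg x == 3)].

Definition bull_cycle (c : seq T) : Prop :=
  [/\ is_gcycle c, #|[set x | (x \in c) && (deg x == 3)]| = 2
    & forall x, x \in c -> (deg x == 2) || (deg x == 3)].

Definition bull_pair (u v : T) : Prop :=
  exists c, [/\ bull_cycle c, size c = 3, u != v,
               (u \in c) && (deg u == 3) & (v \in c) && (deg v == 3)].

Definition bull_free_path (p : seq T) : Prop :=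
  if p is x :: q then ~ bull_pair x (last x q) else True.

Definition nice : Prop :=
  [/\ forall x y, connect g x y,
      exists x, 4 <= deg x,
      forall c, ~ pan_cycle c
    & forall c, bull_cycle c -> size c = 3].

End Graphs.

(* Main.v *)
Require Import Defs.
From mathcomp Require Import all_boot zify.
Set Implicit Arguments. Unset Strict Implicit. Unset Printing Implicit Defensive.

Ltac slia := repeat match goal with H : context [size _] |- _ => revert H end;
  repeat (match goal with |- context [@size _ ?q] => let n := fresh "n" in set n := size q; clearbody n end);
  intros; lia.

Section Aux.
Variables (T : finType) (g : rel T).

Definition disj (q1 q2 : seq T) := forall e, e \in pedges q1 -> e \in pedges q2 -> False.

Lemma pedgesP (q : seq T) e (x0 : T) :
  reflect (exists2 i, i.+1 < size q & e = [set nth x0 q i; nth x0 q i.+1]) (e \in pedges q).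
Proof.
have mP n : minn n n.-1 = n.-1 by apply/minn_idPr; exact: leq_pred.
apply: (iffP mapP) => [[xy] | [i Hi ->]].
  move=> /(nthP (x0, x0)) [i]; rewrite size_zip size_behead mP ltn_predRL => Hi <- ->.
  exists i => //.
  by rewrite nth_zip_cond size_zip size_behead mP ltn_predRL Hi /= nth_behead.
exists (nth x0 q i, nth x0 q i.+1) => //.
apply/(nthP (x0, x0)); exists i; first by rewrite size_zip size_behead mP ltn_predRL.
by rewrite nth_zip_cond size_zip size_behead mP ltn_predRL Hi /= nth_behead.
Qed.

Lemma pedges_mem (q : seq T) e x : e \in pedges q -> x \in e -> x \in q.
Proof.
case/(pedgesP _ _ x) => i Hi ->; rewrite !inE => /orP [] /eqP ->; apply: mem_nth; slia.
Qed.

Lemma size_pedges (q : seq T) : size (pedges q) = (size q).-1.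
Proof. rewrite size_map size_zip size_behead; lia. Qed.

Lemma gpath_nth (q : seq T) x0 i : is_gpath g q -> i.+1 < size q -> g (nth x0 q i) (nth x0 q i.+1).
Proof.
case: q => [|y q] /and3P [_ _ hp] // Hi.
by move/(pathP x0): hp => /(_ i); apply.
Qed.

Lemma nbr_in x (s : seq T) y : uniq s -> all (g x) s -> deg g x <= size s -> g x y -> y \in s.
Proof.
move=> us al dl gy.
have sub : [set z in s] \subset [set z | g x z].
  by apply/subsetP => z; rewrite !inE => /(allP al).
have : [set z in s] == [set z | g x z].
  have cs : #|[set z in s]| = size s by rewrite cardsE; apply/card_uniqP.
  by rewrite eqEcard sub /= cs.
move/eqP => E; have : y \in [set z | g x z] by rewrite inE.
by rewrite -E inE.
Qed.

Lemma pp_uniq (P : seq (seq T)) : is_path_partition g P -> uniq P.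
Proof.
case=> Hg Hd _; apply/negPn/negP => /(uniqPn [::]) [i [j [ij js E]]].
have Hq : is_gpath g (nth [::] P i) := Hg _ (mem_nth [::] (ltn_trans ij js)).
have sz : 1 < size (nth [::] P i) by case/and3P: Hq.
case Eq: (nth [::] P i) sz => [|x0 q] // sz.
have He : [set nth x0 (nth [::] P i) 0; nth x0 (nth [::] P i) 1] \in pedges (nth [::] P i).
  by apply/pedgesP; exists 0; rewrite Eq.
have := Hd i j (ltn_trans ij js) js (negbT (ltn_eqF ij)) _ He.
by rewrite -E He.
Qed.

Lemma pp_disj (P : seq (seq T)) : is_path_partition g P ->
  forall q1 q2, q1 \in P -> q2 \in P -> q1 != q2 -> disj q1 q2.
Proof.
case=> _ Hd _ q1 q2 i1 i2 n12 e e1 e2.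
have := Hd (index q1 P) (index q2 P); rewrite !index_mem !nth_index // => /(_ i1 i2).
have -> : index q1 P != index q2 P.
  by apply: contra n12 => /eqP E; rewrite -(nth_index [::] i1) E nth_index.
by move=> /(_ isT e e1); rewrite e2.
Qed.

Lemma disj_pp (Q : seq (seq T)) : uniq Q ->
  (forall q1 q2, q1 \in Q -> q2 \in Q -> q1 != q2 -> disj q1 q2) ->
  forall i j, i < size Q -> j < size Q -> i != j ->
         forall ed, ed \in pedges (nth [::] Q i) -> ed \notin pedges (nth [::] Q j).
Proof.
move=> uQ HQ i j iQ jQ ij ed e1; apply/negP => e2.
apply: (HQ _ _ (mem_nth _ iQ) (mem_nth _ jQ) _ _ e1 e2).
by rewrite nth_uniq.
Qed.

Lemma bull_tri u v : symmetric g -> bull_pair g u v -> exists w,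
  [/\ u != w, v != w, u != v, [/\ g u v, g u w & g v w] & [/\ deg g u = 3, deg g v = 3 & deg g w = 2]].
Proof.
move=> gs [c [[/and3P [uc sc cyc] c2 cdeg] s3 nuv /andP [uin /eqP du] /andP [vin /eqP dv]]].
have third z : z \in c -> z != u -> z != v -> deg g z = 2.
  move=> zc zu zv; case/orP: (cdeg z zc) => /eqP // dz.
  have : #|[set x in [:: u; v; z]]| <= #|[set x | (x \in c) && (deg g x == 3)]|.
    apply: subset_leq_card; apply/subsetP => x; rewrite !inE.
    by case/or3P => /eqP ->; rewrite ?uin ?vin ?zc ?du ?dv ?dz.
  have uz : uniq [:: u; v; z] by rewrite /= !inE negb_or nuv eq_sym zu eq_sym zv.
  by rewrite c2 cardsE (card_uniqP uz).
case: c uc sc cyc c2 cdeg s3 uin vin third => [|a [|b [|d [|]]]] // uc sc cyc c2 cdeg s3 uin vin third.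
move: uc cyc; rewrite /= !inE !negb_or !andbT => /andP [/andP [ab ad] bd] /and3P [gab gbd gda].
have ba : b != a by rewrite eq_sym.
have da : d != a by rewrite eq_sym.
have db : d != b by rewrite eq_sym.
have gba : g b a by rewrite gs.
have gdb : g d b by rewrite gs.
have gad : g a d by rewrite gs.
rewrite !inE in uin vin.
case/or3P: uin => /eqP ?; case/or3P: vin => /eqP ?; subst u v; rewrite ?eqxx // in nuv.
- by exists d; split => //; split => //; apply: third; rewrite // !inE eqxx ?orbT.
- by exists b; split => //; split => //; apply: third; rewrite // !inE eqxx ?orbT.
- by exists d; split => //; split => //; apply: third; rewrite // !inE eqxx ?orbT.
- by exists a; split => //; split => //; apply: third; rewrite // !inE eqxx ?orbT.
- by exists b; split => //; split => //; apply: third; rewrite // !inE eqxx ?orbT.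
- by exists a; split => //; split => //; apply: third; rewrite // !inE eqxx ?orbT.
Qed.

End Aux.

Section Main.
Variables (T : finType) (g : rel T).
Hypotheses (gs : symmetric g) (gi : irreflexive g).
Variables (u v w : T) (p' : seq T) (P : seq (seq T)).
Local Notation p := (u :: p').
Local Notation n := (size p').
Local Notation S := [:: u; v; w].
Hypotheses (nuw : u != w) (nvw : v != w) (nuv : u != v) (guv : g u v) (guw : g u w) (gvw : g v w)
  (du : deg g u = 3) (dv : deg g v = 3) (dw : deg g w = 2) (hv : last u p' = v)
  (hP : is_path_partition g P) (pP : p \in P).
Variables (x : T).
Hypotheses (xp : x \in p) (dx : 4 <= deg g x).

Lemma hp : is_gpath g p.
Proof. by case: hP => H _ _; apply: H. Qed.

Lemma up : uniq p.
Proof. by case/and3P: hp. Qed.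

Lemma nthl : nth u p n = v.
Proof. by have := nth_last u p; rewrite /= hv. Qed.

Lemma idx_u k : k <= n -> nth u p k = u -> k = 0.
Proof.
move=> kn E; have kp : k < size p by rewrite /= ltnS.
by apply/eqP; rewrite -(@nth_uniq _ u p k 0 kp (ltn0Sn _) up) E.
Qed.

Lemma idx_v k : k <= n -> nth u p k = v -> k = n.
Proof.
move=> kn E; have kp : k < size p by rewrite /= ltnS.
by apply/eqP; rewrite -(@nth_uniq _ u p k n kp (ltnSn _) up) E nthl.
Qed.

Lemma xj : exists j, [/\ 0 < j, j < n & nth u p j = x].
Proof.
case/(nthP u): xp => j jp jx; exists j; split => //.
- case: j jp jx => // _ /= E; by move: dx; rewrite -E du.
- rewrite /= ltnS leq_eqVlt in jp; case/orP: jp => // /eqP E.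
  by move: dx; rewrite -jx E nthl dv.
Qed.

Lemma n2 : 1 < n.
Proof. by case: xj => j [j0 jn _]; apply: leq_trans jn. Qed.

Lemma Nw y : g w y -> y \in [:: u; v].
Proof.
apply: nbr_in => //=; first by rewrite inE andbT.
by rewrite gs guw gs gvw.
by rewrite dw.
Qed.

Lemma wnp : w \notin p.
Proof.
apply/negP => /(nthP u) [k kp wk].
have k0 : k != 0 by apply/eqP => k0; move: wk; rewrite k0 /= => E; move: nuw; rewrite E eqxx.
have kn : k != n by apply/eqP => kn; move: wk; rewrite kn nthl => E; move: nvw; rewrite E eqxx.
have kp' : k <= n by rewrite -ltnS.
move: k0 kn kp kp' wk; case: k => [//|k] _ kn kp kp' wk.
have g1 : g w (nth u p k) by rewrite gs -wk; apply: gpath_nth hp _.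
have g2 : g w (nth u p k.+2).
  by rewrite -wk; apply: gpath_nth hp _; rewrite /= ltnS ltn_neqAle kn kp'.
have k2n : k.+2 <= n by rewrite ltn_neqAle kn kp'.
have e1 : k = 0.
  move: (Nw g1); rewrite !inE => /orP [] /eqP E1; first exact: idx_u (ltnW kp') E1.
  by move: (idx_v (ltnW kp') E1) => E; rewrite E ltnn in kp'.
have e2 : k.+2 = n.
  move: (Nw g2); rewrite !inE => /orP [] /eqP E2; first by move: (idx_u k2n E2).
  exact: idx_v k2n E2.
case: xj => j [j0 jn jx].
have j1 : j = 1 by rewrite -e2 e1 in jn; case: j j0 jn {jx} => [|[|[|]]].
by move: dx; rewrite -jx j1 -e1 wk dw.
Qed.

Local Notation a := (nth u p 1).
Local Notation b := (nth u p n.-1).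

Lemma n1 : n.-1.+1 = n.
Proof. by rewrite prednK // ltnW // n2. Qed.

Lemma gua : g u a.
Proof. by apply: (@gpath_nth _ g p u 0 hp); rewrite /= ltnS ltnW // n2. Qed.

Lemma ea : [set u; a] \in pedges p.
Proof. by apply/pedgesP; exists 0; rewrite //= ltnS ltnW // n2. Qed.

Lemma anv : a != v.
Proof. apply/eqP => E; move: (idx_v (ltnW n2) E) n2 => <-; by []. Qed.

Lemma ap : a \in p.
Proof. by apply: mem_nth; rewrite /= ltnS ltnW // n2. Qed.

Lemma anw : a != w.
Proof. by apply/eqP => E; move: wnp; rewrite -E ap. Qed.

Lemma gbv : g b v.
Proof.
have := @gpath_nth _ g p u n.-1 hp; rewrite n1 nthl; apply; by rewrite /= ltnSn.
Qed.

Lemma eb : [set b; v] \in pedges p.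
Proof. apply/(pedgesP _ _ u); exists n.-1; rewrite n1 ?nthl //=. Qed.

Lemma bp : b \in p.
Proof. by apply: mem_nth; rewrite /= ltnS leq_pred. Qed.

Lemma bnu : b != u.
Proof.
apply/eqP => E; move: (idx_u (leq_pred _) E) => E0.
by move: n2; rewrite -n1 E0.
Qed.

Lemma bnw : b != w.
Proof. by apply/eqP => E; move: wnp; rewrite -E bp. Qed.

Lemma Nu y : g u y -> y \in [:: v; w; a].
Proof.
apply: nbr_in => //=; first by rewrite !inE negb_or nvw eq_sym anv eq_sym anw.
by rewrite guv guw gua.
by rewrite du.
Qed.

Lemma Nv y : g v y -> y \in [:: u; w; b].
Proof.
apply: nbr_in => //=; first by rewrite !inE negb_or nuw eq_sym bnu eq_sym bnw.
by rewrite gs guv gvw gs gbv.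
by rewrite dv.
Qed.

Lemma Fuv : [set u; v] \notin pedges p.
Proof.
apply/negP => /(pedgesP _ _ u) [i ip E].
have iu : i <= n by rewrite -ltnS ltnW.
have iu' : i.+1 <= n by [].
have : u \in [set u; v] by rewrite !inE eqxx.
have : v \in [set u; v] by rewrite !inE eqxx orbT.
rewrite E !inE => /orP [] /eqP V /orP [] /eqP U.
- by move: nuv; rewrite U V eqxx.
- by move: (idx_u iu' (esym U)).
- have I0 := idx_u iu (esym U); have In := idx_v iu' (esym V).
  by move: n2; rewrite -In I0.
- by move: nuv; rewrite U V eqxx.
Qed.

Lemma step q y z : disj p q -> g y z -> [set y; z] \in pedges q -> y \in S -> z \in S.
Proof.
move=> D gyz eq; rewrite !inE => /or3P [] /eqP Y; subst y.
- move: (Nu gyz); rewrite !inE => /or3P [] /eqP Z; rewrite Z ?eqxx ?orbT //.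
  by case: (D _ ea); rewrite -Z.
- move: (Nv gyz); rewrite !inE => /or3P [] /eqP Z; rewrite Z ?eqxx ?orbT //.
  by case: (D _ eb); rewrite setUC -Z.
- by move: (Nw gyz); rewrite !inE => /orP [] /eqP ->; rewrite eqxx ?orbT.
Qed.

Lemma bad q : q \in P -> q != p -> has (fun z => z \in S) q -> {subset q <= S}.
Proof.
move=> qP nqp /hasP [z zq zS].
have D : disj p q by apply: (pp_disj hP) => //; rewrite eq_sym.
have gq : is_gpath g q by case: hP => H _ _; apply: H.
have H : forall i, i < size q -> (nth u q i \in S) = (nth u q 0 \in S).
  elim => [//|i IH] iq; rewrite -IH ?(ltnW iq) //.
  have g1 := gpath_nth u gq iq.
  have e1 : [set nth u q i; nth u q i.+1] \in pedges q by apply/pedgesP; exists i.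
  apply/idP/idP.
  - apply: (step D) => //; first by rewrite gs.
    by rewrite setUC.
  - exact: (step D).
case/(nthP u): zq => k kq kz.
move=> y /(nthP u) [j jq <-]; rewrite H // -(H k) // kz //.
Qed.

Lemma bad_size q : q \in P -> q != p -> has (fun z => z \in S) q -> size (pedges q) <= 2.
Proof.
move=> qP nqp hq; have sub := bad qP nqp hq.
have gq : is_gpath g q by case: hP => H _ _; apply: H.
have : size q <= 3 by apply: uniq_leq_size sub; case/and3P: gq.
by rewrite size_pedges; case: (size q) => [|[|[|[|]]]].
Qed.


Lemma two_bad : exists qa qb, [/\ qa \in P, qb \in P, qa != qb, qa != p & qb != p] /\ (has (fun z => z \in S) qa && has (fun z => z \in S) qb).
Proof.
case: hP => _ _ Hc.
case: (Hc _ _ guv) => q1 q1P e1.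
case: (Hc _ _ guw) => q2 q2P e2.
case: (Hc _ _ gvw) => q3 q3P e3.
have n1p : q1 != p by apply: contraNneq Fuv => <-.
have n2p : q2 != p.
  apply: contraNneq wnp => E; rewrite -E; apply: (pedges_mem e2); by rewrite !inE eqxx orbT.
have n3p : q3 != p.
  apply: contraNneq wnp => E; rewrite -E; apply: (pedges_mem e3); by rewrite !inE eqxx orbT.
have h1 : has (fun z => z \in S) q1.
  by apply/hasP; exists u; [apply: (pedges_mem e1); rewrite !inE eqxx | rewrite !inE eqxx].
have h2 : has (fun z => z \in S) q2.
  by apply/hasP; exists u; [apply: (pedges_mem e2); rewrite !inE eqxx | rewrite !inE eqxx].
have h3 : has (fun z => z \in S) q3.
  by apply/hasP; exists v; [apply: (pedges_mem e3); rewrite !inE eqxx | rewrite !inE eqxx ?orbT].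
case: (eqVneq q1 q2) => [E12 | N12]; last by exists q1, q2; rewrite h1 h2.
case: (eqVneq q2 q3) => [E23 | N23]; last by exists q2, q3; rewrite h2 h3.
have : 3 <= size (pedges q1).
  apply: (@uniq_leq_size _ [:: [set u; v]; [set u; w]; [set v; w]]).
    rewrite /= !inE !andbT negb_or -andbA; apply/and3P; split.
    - apply/negP => /eqP E; have : w \in [set u; w] by rewrite !inE eqxx orbT.
      by rewrite -E !inE eq_sym (negbTE nuw) eq_sym (negbTE nvw).
    - apply/negP => /eqP E; have : u \in [set u; v] by rewrite !inE eqxx.
      by rewrite E !inE (negbTE nuv) (negbTE nuw).
    - apply/negP => /eqP E; have : u \in [set u; w] by rewrite !inE eqxx.
      by rewrite E !inE (negbTE nuv) (negbTE nuw).
  move=> e; rewrite !inE => /or3P [] /eqP ->; [exact: e1 | rewrite E12; exact: e2 | rewrite E12 E23; exact: e3].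
by rewrite leqNgt ltnS bad_size.
Qed.

Definition keep (q : seq T) := (q != p) && ~~ has (fun z => z \in S) q.
Definition Q := (w :: p) :: [:: u; v; w] :: [seq q <- P | keep q].

Lemma ewp : pedges (w :: p) = [set w; u] :: pedges p.
Proof. by []. Qed.
Lemma eS : pedges [:: u; v; w] = [:: [set u; v]; [set v; w]].
Proof. by []. Qed.

Lemma disj_sym (q1 q2 : seq T) : disj q1 q2 -> disj q2 q1.
Proof. by move=> D e h1 h2; apply: (D e h2 h1). Qed.

Lemma D1 : disj (w :: p) [:: u; v; w].
Proof.
move=> e; rewrite ewp eS !inE => /orP [/eqP -> | ep] /orP [] /eqP E.
- have : w \in [set w; u] by rewrite !inE eqxx.
  by rewrite E !inE eq_sym (negbTE nuw) eq_sym (negbTE nvw).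
- have : u \in [set w; u] by rewrite !inE eqxx orbT.
  by rewrite E !inE (negbTE nuv) (negbTE nuw).
- by move: Fuv; rewrite -E ep.
- by move: wnp; rewrite (pedges_mem ep) // E !inE eqxx orbT.
Qed.

Lemma D2 q : keep q -> q \in P -> disj (w :: p) q.
Proof.
move=> /andP [nqp nh] qP e; rewrite ewp inE => /orP [/eqP -> | ep] eq.
- move/negP: nh; apply; apply/hasP; exists u; last by rewrite inE eqxx.
  by apply: (pedges_mem eq); rewrite !inE eqxx orbT.
- by apply: (pp_disj hP pP qP _ ep eq); rewrite eq_sym.
Qed.

Lemma D3 q : keep q -> disj [:: u; v; w] q.
Proof.
move=> /andP [nqp nh] e; rewrite eS !inE => /orP [] /eqP -> eq;
  move/negP: nh; apply; apply/hasP; exists v; rewrite ?inE ?eqxx ?orbT //;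
  by apply: (pedges_mem eq); rewrite !inE eqxx ?orbT.
Qed.

Lemma Qpp : is_path_partition g Q.
Proof.
split.
- move=> q; rewrite inE => /orP [/eqP -> | ]; [ | rewrite inE => /orP [/eqP -> | ]].
  + case/and3P: hp => up' sp pp; apply/and3P; split.
    * by rewrite cons_uniq wnp up'.
    * by [].
    * by rewrite /= gs guw pp.
  + by rewrite /is_gpath /= !inE !negb_or nuv nuw nvw guv gvw.
  + by rewrite mem_filter => /andP [_ qP]; case: hP => H _ _; exact: H.
- apply: disj_pp.
  + have n1 : (w :: p) != [:: u; v; w].
      apply/eqP => /(congr1 size) /= /eqP; rewrite !eqSS => /eqP E; by move: n2; rewrite E.
    have n2' : (w :: p) \notin [seq q <- P | keep q].
      by rewrite mem_filter /keep /= !inE eqxx !orbT /= andbF.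
    have n3 : [:: u; v; w] \notin [seq q <- P | keep q].
      by rewrite mem_filter /keep /= !inE eqxx /= andbF.
    by rewrite /Q /= inE negb_or n1 n2' n3 filter_uniq // (pp_uniq hP).
  + have K q : q \in [seq q <- P | keep q] -> keep q /\ q \in P by rewrite mem_filter => /andP[].
    move=> q1 q2; rewrite !inE => H1 H2 N.
    case/orP: H1 => [/eqP E1 | /orP [/eqP E1 | /K [k1 q1P]]]; case/orP: H2 => [/eqP E2 | /orP [/eqP E2 | /K [k2 q2P]]];
      rewrite ?E1 ?E2 ?E1 in N *; rewrite ?eqxx // in N.
    * exact: D1.
    * exact: D2.
    * exact: disj_sym D1.
    * exact: D3.
    * exact: disj_sym (D2 _ _).
    * exact: disj_sym (D3 _).
    * exact: (pp_disj hP).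
- move=> y z gyz; case: hP => _ _ Hc; case: (Hc _ _ gyz) => q qP e.
  case: (eqVneq q p) => [Eq | nqp].
    exists (w :: p); first by rewrite !inE eqxx.
    by rewrite ewp inE -Eq e orbT.
  case Hh: (has (fun z => z \in S) q); last first.
    by exists q => //; rewrite !inE ?mem_filter /keep nqp Hh qP !orbT.
  have sub := bad qP nqp Hh.
  have ys : y \in S by apply: sub; apply: (pedges_mem e); rewrite !inE eqxx.
  have zs : z \in S by apply: sub; apply: (pedges_mem e); rewrite !inE eqxx orbT.
  have nyz : y != z by apply: contraTneq gyz => ->; rewrite gi.
  rewrite !inE in ys zs; case/or3P: ys => /eqP Y; case/or3P: zs => /eqP Z; subst y z; rewrite ?eqxx // in nyz.
  + by exists [:: u; v; w]; rewrite ?eS !inE ?eqxx ?orbT.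
  + by exists (w :: p); rewrite ?ewp !inE ?eqxx ?orbT // setUC eqxx.
  + by exists [:: u; v; w]; rewrite ?eS !inE ?eqxx ?orbT // setUC eqxx.
  + by exists [:: u; v; w]; rewrite ?eS !inE ?eqxx ?orbT.
  + by exists (w :: p); rewrite ?ewp !inE ?eqxx ?orbT.
  + by exists [:: u; v; w]; rewrite ?eS !inE ?eqxx ?orbT // setUC eqxx ?orbT.
Qed.

Lemma Qsize : size Q < size P.
Proof.
rewrite /Q /= size_filter -(count_predC keep P).
case: two_bad => qa [qb [[qaP qbP nab nap nbp] /andP [ha hb]]].
have : 3 <= count (predC keep) P.
  rewrite -size_filter; apply: (@uniq_leq_size _ [:: p; qa; qb]).
    have npa : p != qa by rewrite eq_sym.
    have npb : p != qb by rewrite eq_sym.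
    by rewrite /= !inE !negb_or npa npb nab.
  move=> q; rewrite !inE => /or3P [] /eqP ->; rewrite mem_filter /= /keep ?eqxx ?ha ?hb ?andbF /= ?pP ?qaP ?qbP //.
by move=> H; rewrite -addn2 ltn_add2l.
Qed.

Lemma contra : (forall Q, is_path_partition g Q -> size P <= size Q) -> False.
Proof. by move=> H; have := H _ Qpp; rewrite leqNgt Qsize. Qed.

End Main.

Unset Implicit Arguments.
Theorem lemma10 (T : finType) (g : rel T) :
  symmetric g -> irreflexive g -> nice g ->
  forall P : seq (seq T), min_path_partition g P ->
  forall p, p \in P -> (exists2 x, x \in p & 4 <= deg g x) ->
  bull_free_path g p.
Proof.
move=> gs gi _ P [hP hmin] p pP [x xp dx].
case: p pP xp => [|u p'] //= pP xp bp.
case: (bull_tri gs bp) => w [nuw nvw nuv [guv guw gvw] [du dv dw]].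
exact: (contra gs gi nuw nvw nuv guv guw gvw du dv dw (erefl _) hP pP xp dx hmin).
Qed.
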